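(* Let $M$ and $M'$ be matroids on ground sets $E,E'$ with $E\cap E'=\{p\}$, where $p$ is a coloop of neither $M$ nor $M'$. Then $f(\operatorname{Ser}(M,M'))\le f(M)+f(M')$. Moreover, if $M$ has two disjoint bases neither of which contains $p$, then $f(\operatorname{Ser}(M,M'))\le\min\bigl(f(M),f(M')\bigr)$.
   Context: The series connection $\operatorname{Ser}(M,M')$ is the matroid on $E\cup E'$ whose bases are the sets $B\cup B'$ with $B$ a basis of $M$, $B'$ a basis of $M'$, and $B\cap B'=\varnothing$. For a matroid $M$, $\mathcal{B}(M)$ denotes its set of bases, and the distance between two bases $B,B'$ is $|B\triangle B'|$; $\operatorname{diam}$ denotes diameter. The Borsuk number $f(M)$ is the minimum number of parts in a partition of $\mathcal{B}(M)$ in which every part has diameter strictly smaller than $\operatorname{diam}(\mathcal{B}(M))$; if $M$ has exactly one basis, $f(M):=+\infty$. *)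

(* Defs.v *)
From mathcomp Require Import all_boot.
Set Implicit Arguments. Unset Strict Implicit. Unset Printing Implicit Defensive.

Section Matroids.
Variable T : finType.

Definition is_matroid (E : {set T}) (BM : {set {set T}}) : bool :=
  [&& BM != set0,
      [forall B in BM, B \subset E] &
      [forall B1 in BM, forall B2 in BM, forall x in B1 :\: B2,
         exists y in B2 :\: B1, (y |: (B1 :\ x)) \in BM]].

Definition coloop (BM : {set {set T}}) (p : T) : bool := [forall B in BM, p \in B].

Definition Ser_bases (BM BM' : {set {set T}}) : {set {set T}} :=
  [set X | [exists B in BM, exists B' in BM',
              [disjoint B & B'] && (X == B :|: B')]].

Definition symdiff (A B : {set T}) : {set T} := (A :\: B) :|: (B :\: A).
Definition dist (A B : {set T}) : nat := #|symdiff A B|.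

(* diameter of a family of sets (0 for the empty family) *)
Definition diam (F : {set {set T}}) : nat :=
  \max_(B1 in F) \max_(B2 in F) dist B1 B2.

Definition borsuk_partition (BM : {set {set T}}) (P : {set {set {set T}}}) : bool :=
  partition P BM && [forall A in P, diam A < diam BM].

(* Borsuk number, with None standing for +oo (no such partition, e.g.
   when there is exactly one basis). *)
Definition borsuk (BM : {set {set T}}) : option nat :=
  if [exists P, borsuk_partition BM P]
  then Some (\big[minn/#|BM|]_(P | borsuk_partition BM P) #|P|)
  else None.

End Matroids.

(* extended naturals: None = +oo *)
Definition ole (a b : option nat) : bool :=
  match a, b with
  | _, None => true
  | None, Some _ => false
  | Some x, Some y => x <= y
  end.

Definition oadd (a b : option nat) : option nat :=
  match a, b with Some x, Some y => Some (x + y) | _, _ => None end.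

Definition omin (a b : option nat) : option nat :=
  match a, b with
  | None, b => b
  | a, None => a
  | Some x, Some y => Some (minn x y)
  end.

(* Main.v *)
Require Import Defs.
From mathcomp Require Import all_boot.
Set Implicit Arguments. Unset Strict Implicit. Unset Printing Implicit Defensive.

Section S.
Variable T : finType.
Implicit Types (A B C X Y : {set T}) (F Q S : {set {set T}}).

Lemma dist_le_diam F X Y : X \in F -> Y \in F -> dist X Y <= diam F.
Proof.
move=> HX HY; rewrite /diam.
rewrite (bigD1 X) //= (bigD1 Y) //=.
by rewrite -maxnA leq_maxl.
Qed.

Lemma diam_lt F D : 0 < D -> (forall X Y, X \in F -> Y \in F -> dist X Y < D) -> diam F < D.
Proof.
move=> D0 H; rewrite -(prednK D0) ltnS; apply/bigmax_leqP => X HX.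
apply/bigmax_leqP => Y HY; rewrite -ltnS prednK //; exact: H.
Qed.

Lemma dist_union_le B B' C C' :
  dist (B :|: B') (C :|: C') <= dist B C + dist B' C'.
Proof.
rewrite /dist; apply: leq_trans (leq_card_setU _ _).
apply: subset_leq_card; apply/subsetP => x; rewrite /symdiff !inE.
by case: (x \in B); case: (x \in B'); case: (x \in C); case: (x \in C').
Qed.

Lemma dist_union_ge E E' p B B' C C' :
  E :&: E' = [set p] -> B \subset E -> C \subset E -> B' \subset E' -> C' \subset E' ->
  p \notin B -> p \notin C ->
  dist B C + dist B' C' <= dist (B :|: B') (C :|: C').
Proof.
move=> EE sB sC sB' sC' pB pC.
have key : forall x, x \in E -> x \in E' -> x = p.
  by move=> x h1 h2; apply/set1P; rewrite -EE inE h1 h2.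
have dis : [disjoint symdiff B C & symdiff B' C'].
  apply/pred0P => x /=; rewrite /symdiff !inE.
  case xB: (x \in B); case xC: (x \in C) => //=; case xB': (x \in B'); case xC': (x \in C') => //=;
  first [ have ex := key x (subsetP sB x xB) (subsetP sB' x xB'); by rewrite -ex xB in pB
  | have ex := key x (subsetP sB x xB) (subsetP sC' x xC'); by rewrite -ex xB in pB
  | have ex := key x (subsetP sC x xC) (subsetP sB' x xB'); by rewrite -ex xC in pC
  | have ex := key x (subsetP sC x xC) (subsetP sC' x xC'); by rewrite -ex xC in pC ].
rewrite /dist; have /leqifP := leq_card_setU (symdiff B C) (symdiff B' C').
rewrite dis => /eqP <-; apply: subset_leq_card; apply/subsetP => x.
rewrite /symdiff !inE.
case xB: (x \in B); case xC: (x \in C) => //=; case xB': (x \in B'); case xC': (x \in C') => //=;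
  first [ have ex := key x (subsetP sB x xB) (subsetP sB' x xB'); by rewrite -ex xB in pB
  | have ex := key x (subsetP sB x xB) (subsetP sC' x xC'); by rewrite -ex xB in pB
  | have ex := key x (subsetP sC x xC) (subsetP sB' x xB'); by rewrite -ex xC in pC
  | have ex := key x (subsetP sC x xC) (subsetP sC' x xC'); by rewrite -ex xC in pC ].
Qed.

Lemma dist_le_card B C : dist B C <= #|B| + #|C|.
Proof.
rewrite /dist; apply: leq_trans (leq_card_setU B C); apply: subset_leq_card.
apply/subsetP => x; rewrite /symdiff !inE.
by case: (x \in B); case: (x \in C).
Qed.

Lemma dist_disj B C : [disjoint B & C] -> dist B C = #|B| + #|C|.
Proof.
move=> dis; have /leqifP := leq_card_setU B C; rewrite dis => /eqP <-.
rewrite /dist; apply: eq_card => x; rewrite /symdiff !inE.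
move/pred0P: dis => /(_ x) /=.
by case: (x \in B); case: (x \in C).
Qed.


Lemma exch E BM B1 B2 x : is_matroid E BM -> B1 \in BM -> B2 \in BM -> x \in B1 :\: B2 ->
  exists2 y, y \in B2 :\: B1 & (y |: (B1 :\ x)) \in BM.
Proof.
case/and3P => _ _ /forallP H h1 h2 hx.
move: (H B1); rewrite h1 /= => /forallP /(_ B2); rewrite h2 /= => /forallP /(_ x).
by rewrite hx /= => /existsP [y /andP [hy1 hy2]]; exists y.
Qed.

Lemma base_card_le E BM B1 B2 : is_matroid E BM -> B1 \in BM -> B2 \in BM -> #|B1| <= #|B2|.
Proof.
move=> HM; move: {2}#|B1 :\: B2| (erefl #|B1 :\: B2|) => n.
elim: n B1 => [|n IH] B1 hn h1 h2.
  by apply: subset_leq_card; rewrite -setD_eq0; apply/eqP/cards0_eq.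
have : B1 :\: B2 != set0 by rewrite -card_gt0 hn.
case/set0Pn => x hx.
have [y hy h3] := exch HM h1 h2 hx.
move: hx hy; rewrite !inE => /andP [xB2 xB1] /andP [yB1 yB2].
have c3 : #|y |: (B1 :\ x)| = #|B1|.
  rewrite cardsU1 (cardsD1 x B1) xB1 !inE (negbTE yB1) andbF /=; by [].
rewrite -c3; apply: IH => //.
have -> : (y |: (B1 :\ x)) :\: B2 = (B1 :\: B2) :\ x.
  apply/setP => z; rewrite !inE.
  case: (z =P y) => [->|_] /=; rewrite ?yB2 ?(negbTE yB1) ?andbF //.
  by case: (z \in B2); case: (z != x).
move: hn; rewrite (cardsD1 x (B1 :\: B2)) !inE xB2 xB1 /=.
by rewrite add1n => -[].
Qed.

Lemma base_card E BM B1 B2 : is_matroid E BM -> B1 \in BM -> B2 \in BM -> #|B1| = #|B2|.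
Proof.
by move=> HM h1 h2; apply/eqP; rewrite eqn_leq !(base_card_le HM).
Qed.


Lemma part_exists (L : finType) S (lab : {set T} -> L) (Ls : {set L}) :
  (forall X, X \in S -> lab X \in Ls) ->
  (forall X Y, X \in S -> Y \in S -> lab X = lab Y -> dist X Y < diam S) ->
  exists2 P, borsuk_partition S P & #|P| <= #|Ls|.
Proof.
move=> HL HD; exists (preim_partition lab S).
  rewrite /borsuk_partition preim_partitionP /=; apply/forallP => A.
  apply/implyP => /imsetP [x xS ->].
  have D0 : 0 < diam S by apply: leq_ltn_trans (HD x x xS xS erefl).
  apply: diam_lt => // Y Z; rewrite !inE => /andP [YS /eqP eY] /andP [ZS /eqP eZ].
  by apply: HD => //; rewrite -eY -eZ.
apply: leq_trans (leq_imset_card (fun l => [set y in S | l == lab y]) Ls).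
apply: subset_leq_card; apply/subsetP => A /imsetP [x xS ->].
by apply/imsetP; exists (lab x); [apply: HL|].
Qed.

Lemma bigmin_le (I : finType) (Pr : pred I) (F : I -> nat) x j :
  Pr j -> \big[minn/x]_(i | Pr i) F i <= F j.
Proof.
move=> Pj; have : j \in index_enum I by rewrite mem_index_enum.
elim: (index_enum I) => // a r IH; rewrite inE big_cons => /orP [/eqP <-|jr].
  by rewrite Pj geq_minl.
by case: (Pr a) => /=; rewrite ?geq_min IH ?orbT.
Qed.

Lemma borsuk_le S P : borsuk_partition S P -> ole (borsuk S) (Some #|P|).
Proof.
move=> HP; rewrite /borsuk.
have -> : [exists P, borsuk_partition S P] by apply/existsP; exists P.
by rewrite /ole; apply: bigmin_le.
Qed.

Lemma borsuk_some S f : borsuk S = Some f -> exists2 P, borsuk_partition S P & #|P| <= f.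
Proof.
rewrite /borsuk; case: existsP => // -[P0 HP0] [<-].
elim/big_ind: _ => //.
- exists P0 => //; case/andP: HP0 => Hpart _.
  rewrite (card_partition Hpart) -sum1_card; apply: leq_sum => A HA.
  rewrite card_gt0; case/and3P: Hpart => _ _ H0.
  by apply: contraNneq H0 => <-.
- move=> x y [P1 h1 c1] [P2 h2 c2] /=; case: (leqP x y) => hxy.
    by exists P1.
  by exists P2.
- by move=> P HP; exists P.
Qed.

End S.

Section Main.
Variable T : finType.
Variables (E E' : {set T}) (BM BM' : {set {set T}}) (p : T).
Hypotheses (HM : is_matroid E BM) (HM' : is_matroid E' BM') (HE : E :&: E' = [set p]).

Let S := Ser_bases BM BM'.
Implicit Types (B C X Y : {set T}).

Lemma base_sub (E0 : {set T}) (BM0 : {set {set T}}) B : is_matroid E0 BM0 -> B \in BM0 -> B \subset E0.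
Proof. by case/and3P => _ /forallP /(_ B) /implyP H _ /H. Qed.

Definition rep (X : {set T}) : {set T} * {set T} :=
  odflt (set0, set0) [pick BB | [&& BB.1 \in BM, BB.2 \in BM', [disjoint BB.1 & BB.2] & X == BB.1 :|: BB.2]].

Lemma rep_spec X : X \in S ->
  [/\ (rep X).1 \in BM, (rep X).2 \in BM', [disjoint (rep X).1 & (rep X).2] & X = (rep X).1 :|: (rep X).2].
Proof.
rewrite inE /rep => /existsP [B /andP [hB /existsP [B' /andP [hB' /andP [hd /eqP hX]]]]].
case: pickP => [[C C'] /and4P [h1 h2 h3 /eqP h4] | H] /=; first by [].
by move: (H (B, B')); rewrite /= hB hB' hd hX eqxx.
Qed.

Lemma key_p x : x \in E -> x \in E' -> x = p.
Proof. by move=> h1 h2; apply/set1P; rewrite -HE inE h1 h2. Qed.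

Lemma disj_of B B' : B \in BM -> B' \in BM' -> (p \notin B) || (p \notin B') -> [disjoint B & B'].
Proof.
move=> hB hB' hp; apply/pred0P => x /=.
apply/negbTE/negP => /andP [xB xB'].
have ex := key_p (subsetP (base_sub HM hB) x xB) (subsetP (base_sub HM' hB') x xB').
by move: hp; rewrite -ex xB xB'.
Qed.

Lemma union_in B B' : B \in BM -> B' \in BM' -> [disjoint B & B'] -> B :|: B' \in S.
Proof.
move=> hB hB' hd; rewrite inE; apply/existsP; exists B; rewrite hB /=.
by apply/existsP; exists B'; rewrite hB' hd eqxx.
Qed.

Lemma ge_sum B0 C0 B0' C0' : B0 \in BM -> C0 \in BM -> B0' \in BM' -> C0' \in BM' ->
  (p \notin B0) && (p \notin C0) || (p \notin B0') && (p \notin C0') ->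
  dist B0 C0 + dist B0' C0' <= diam S.
Proof.
move=> h1 h2 h3 h4 hp.
have d1 : [disjoint B0 & B0'] by apply: disj_of => //; case/orP: hp => /andP [-> _]; rewrite ?orbT.
have d2 : [disjoint C0 & C0'] by apply: disj_of => //; case/orP: hp => /andP [_ ->]; rewrite ?orbT.
apply: leq_trans (dist_le_diam (union_in h1 h3 d1) (union_in h2 h4 d2)).
have s1 := base_sub HM h1; have s2 := base_sub HM h2.
have s3 := base_sub HM' h3; have s4 := base_sub HM' h4.
case/orP: hp => /andP [q1 q2]; first exact: (dist_union_ge HE).
rewrite addnC (setUC B0) (setUC C0).
have HE2 : E' :&: E = [set p] by rewrite setIC.
exact: (dist_union_ge HE2).
Qed.

Lemma lt_diamS X Y B0 C0 B0' C0' : X \in S -> Y \in S ->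
  B0 \in BM -> C0 \in BM -> B0' \in BM' -> C0' \in BM' ->
  (p \notin B0) && (p \notin C0) || (p \notin B0') && (p \notin C0') ->
  dist (rep X).1 (rep Y).1 + dist (rep X).2 (rep Y).2 < dist B0 C0 + dist B0' C0' ->
  dist X Y < diam S.
Proof.
move=> hX hY h1 h2 h3 h4 hp hlt.
have [_ _ _ eX] := rep_spec hX; have [_ _ _ eY] := rep_spec hY.
rewrite eX eY; apply: leq_ltn_trans (dist_union_le _ _ _ _) _.
exact: leq_trans hlt (ge_sum h1 h2 h3 h4 hp).
Qed.


Lemma exists_far (F : {set {set T}}) n : n < diam F ->
  exists X, exists Y, [/\ X \in F, Y \in F & n < dist X Y].
Proof.
move=> H; case: (boolP [exists X in F, exists Y in F, n < dist X Y]).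
  case/exists_inP => X hX /exists_inP [Y hY h]; by exists X, Y.
move=> /exists_inPn Hn; move: H; rewrite ltnNge => /negP []; apply/bigmax_leqP => X hX.
apply/bigmax_leqP => Y hY; move: (Hn X hX) => /exists_inPn /(_ Y hY).
by rewrite -leqNgt.
Qed.

Lemma bp_facts (F : {set {set T}}) P B : borsuk_partition F P -> B \in F ->
  [/\ pblock P B \in P, B \in pblock P B &
      exists B0, exists C0, [/\ B0 \in F, C0 \in F & diam (pblock P B) < dist B0 C0]].
Proof.
case/andP => hpart /forall_inP hd hB.
have hc : B \in cover P by rewrite (cover_partition hpart).
have hm := pblock_mem hc.
split => //; first by rewrite mem_pblock.
have [B0 [C0 [h1 h2 h3]]] := exists_far (hd _ hm).
by exists B0, C0.
Qed.

Lemma ole_le a m n : ole a (Some m) -> m <= n -> ole a (Some n).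
Proof. by case: a => //= k h1 h2; apply: leq_trans h2. Qed.

Lemma part1 f f' : borsuk BM = Some f -> borsuk BM' = Some f' -> ole (borsuk S) (Some (f + f')).
Proof.
move=> /borsuk_some [P hP cP] /borsuk_some [P' hP' cP'].
pose lab X := if p \in (rep X).2 then (false, pblock P' (rep X).2) else (true, pblock P (rep X).1).
pose Ls := [set (true, A) | A in P] :|: [set (false, A) | A in P'].
have [Q hQ cQ] : exists2 Q, borsuk_partition S Q & #|Q| <= #|Ls|.
  apply: (@part_exists _ _ _ lab Ls).
    move=> X hX; have [h1 h2 _ _] := rep_spec hX.
    have := bp_facts hP h1; case=> m1 _ _; have := bp_facts hP' h2; case=> m2 _ _.
    rewrite /lab /Ls; case: (p \in (rep X).2); rewrite inE; apply/orP; [right|left];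
      apply/imsetP; [exists (pblock P' (rep X).2) => // | exists (pblock P (rep X).1) => //].
  move=> X Y hX hY; have [x1 x2 xd _] := rep_spec hX; have [y1 y2 yd _] := rep_spec hY.
  rewrite /lab; case pX: (p \in (rep X).2); case pY: (p \in (rep Y).2); case=> // eq.
  - have [_ i1 [B0 [C0 [b1 b2 b3]]]] := bp_facts hP' x2.
    have [_ i2 _] := bp_facts hP' y2.
    have dl : dist (rep X).2 (rep Y).2 <= diam (pblock P' (rep X).2).
      by apply: dist_le_diam; rewrite // eq.
    have pxa : p \notin (rep X).1.
      by apply/negP => h; move/pred0P: xd => /(_ p) /=; rewrite h pX.
    have pya : p \notin (rep Y).1.
      by apply/negP => h; move/pred0P: yd => /(_ p) /=; rewrite h pY.
    apply: (lt_diamS hX hY x1 y1 b1 b2); first by rewrite pxa pya.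
    by rewrite ltn_add2l; apply: leq_ltn_trans dl b3.
  - have [_ i1 [B0 [C0 [b1 b2 b3]]]] := bp_facts hP x1.
    have dl : dist (rep X).1 (rep Y).1 <= diam (pblock P (rep X).1).
      by apply: dist_le_diam; rewrite // eq; have [_ i2 _] := bp_facts hP y1.
    apply: (lt_diamS hX hY b1 b2 x2 y2); first by rewrite pX pY orbT.
    by rewrite ltn_add2r; apply: leq_ltn_trans dl b3.
apply: ole_le (borsuk_le hQ) _; apply: leq_trans cQ _.
apply: leq_trans (leq_card_setU _ _) _; apply: leq_add.
  by apply: leq_trans (leq_imset_card _ _) cP.
by apply: leq_trans (leq_imset_card _ _) cP'.
Qed.


Lemma dist_le_disj B C B1 B2 : B \in BM -> C \in BM -> B1 \in BM -> B2 \in BM ->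
  [disjoint B1 & B2] -> dist B C <= dist B1 B2.
Proof.
move=> hB hC h1 h2 hd; rewrite (dist_disj hd) (base_card HM h1 hB) (base_card HM h2 hC).
exact: dist_le_card.
Qed.

Lemma part2a f B1 B2 : B1 \in BM -> B2 \in BM -> [disjoint B1 & B2] -> p \notin B1 -> p \notin B2 ->
  borsuk BM = Some f -> ole (borsuk S) (Some f).
Proof.
move=> h1 h2 hd q1 q2 /borsuk_some [P hP cP].
pose lab X := pblock P (rep X).1.
have [Q hQ cQ] : exists2 Q, borsuk_partition S Q & #|Q| <= #|P|.
  apply: (@part_exists _ _ _ lab P).
    move=> X hX; have [x1 _ _ _] := rep_spec hX.
    by have := bp_facts hP x1; case.
  move=> X Y hX hY; have [x1 x2 _ _] := rep_spec hX; have [y1 y2 _ _] := rep_spec hY.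
  rewrite /lab => eq.
  have [_ i1 [B0 [C0 [b1 b2 b3]]]] := bp_facts hP x1.
  have dl : dist (rep X).1 (rep Y).1 <= diam (pblock P (rep X).1).
    by apply: dist_le_diam; rewrite // eq; have [_ i2 _] := bp_facts hP y1.
  apply: (lt_diamS hX hY h1 h2 x2 y2); first by rewrite q1 q2.
  rewrite ltn_add2r; apply: leq_ltn_trans dl _; apply: leq_trans b3 _.
  exact: dist_le_disj.
apply: ole_le (borsuk_le hQ) _; exact: leq_trans cQ cP.
Qed.

Lemma part2b f B1 B2 : B1 \in BM -> B2 \in BM -> [disjoint B1 & B2] -> p \notin B1 -> p \notin B2 ->
  borsuk BM' = Some f -> ole (borsuk S) (Some f).
Proof.
move=> h1 h2 hd q1 q2 /borsuk_some [P hP cP].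
pose lab X := pblock P (rep X).2.
have [Q hQ cQ] : exists2 Q, borsuk_partition S Q & #|Q| <= #|P|.
  apply: (@part_exists _ _ _ lab P).
    move=> X hX; have [_ x2 _ _] := rep_spec hX.
    by have := bp_facts hP x2; case.
  move=> X Y hX hY; have [x1 x2 _ _] := rep_spec hX; have [y1 y2 _ _] := rep_spec hY.
  rewrite /lab => eq.
  have [_ i1 [B0 [C0 [b1 b2 b3]]]] := bp_facts hP x2.
  have dl : dist (rep X).2 (rep Y).2 <= diam (pblock P (rep X).2).
    by apply: dist_le_diam; rewrite // eq; have [_ i2 _] := bp_facts hP y2.
  apply: (lt_diamS hX hY h1 h2 b1 b2); first by rewrite q1 q2.
  apply: leq_ltn_trans (leq_add (dist_le_disj x1 y1 h1 h2 hd) dl) _.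
  by rewrite ltn_add2l.
apply: ole_le (borsuk_le hQ) _; exact: leq_trans cQ cP.
Qed.

End Main.

Theorem proposition4p4 (T : finType) (E E' : {set T})
    (BM BM' : {set {set T}}) (p : T) :
  is_matroid E BM -> is_matroid E' BM' ->
  E :&: E' = [set p] ->
  ~~ coloop BM p -> ~~ coloop BM' p ->
  ole (borsuk (Ser_bases BM BM')) (oadd (borsuk BM) (borsuk BM')) /\
  ((exists B1, exists B2,
      [/\ B1 \in BM, B2 \in BM, [disjoint B1 & B2], p \notin B1 & p \notin B2]) ->
   ole (borsuk (Ser_bases BM BM')) (omin (borsuk BM) (borsuk BM'))).
Proof.
move=> HM HM' HE _ _; split.
  case e1: (borsuk BM) => [f|]; case e2: (borsuk BM') => [f'|] /=;
    try by case: (borsuk _).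
  exact: (part1 HM HM' HE e1 e2).
move=> [B1 [B2 [h1 h2 hd q1 q2]]].
have a := part2a HM HM' HE h1 h2 hd q1 q2; have b := part2b HM HM' HE h1 h2 hd q1 q2.
case e1: (borsuk BM) => [f|]; case e2: (borsuk BM') => [f'|] //=.
- move: (a _ e1) (b _ e2); case: (borsuk _) => //= k k1 k2.
  by rewrite leq_min k1 k2.
- exact: a.
- exact: b.
- by case: (borsuk _).
Qed.
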